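(* Let $\mathcal{L}$ be an algebraic system and let $\mathbf{Top}\mathcal{L}$ be the category of topological $\mathcal{L}$-structures and continuous $\mathcal L$-homomorphisms. Let $\mathcal C$ be an epireflective subcategory of $\mathbf{Top}$ whose epireflection preserves products. Then $\mathrm{r}_{\mathcal C}(\mathbf{Top}\mathcal{L})$ — the class of structures on $\mathrm{r}_{\mathcal C}X$, $(\mathfrak U,X)\in\mathbf{Top}\mathcal L$, with constants $\mathrm{r}_{(X,\mathcal C)}(c_{\mathfrak U})$ and operations $\Phi(\mathrm{r}_{(X,\mathcal C)}(x_1),\dots,\mathrm{r}_{(X,\mathcal C)}(x_n))=\mathrm{r}_{(X,\mathcal C)}(\Phi_{\mathfrak U}(x_1,\dots,x_n))$ — is an epireflective subcategory of $\mathbf{Top}\mathcal{L}$.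
   Context: An epireflective subcategory $\mathcal C$ of $\mathbf{Top}$ is a full, isomorphism-closed subcategory closed under products and subspaces; each space $X$ has a reflection $\mathrm{r}_{\mathcal C}X\in\mathcal C$ with a continuous surjection $\mathrm{r}_{(X,\mathcal C)}\colon X\to \mathrm{r}_{\mathcal C}X$ through which every continuous map from $X$ into a space of $\mathcal C$ factors uniquely; $\mathrm{r}_{\mathcal C}(f)$ is the induced map. The epireflection preserves products if for every family $\{X_i\}$ of spaces the unique continuous map $\mu_{\mathcal C}\colon\mathrm{r}_{\mathcal C}\prod X_i\to\prod\mathrm{r}_{\mathcal C}X_i$ with $\pi_j\circ\mu_{\mathcal C}=\mathrm{r}_{\mathcal C}(\pi_{X_j})$ for all $j$ is a homeomorphism. An algebraic system $\mathcal L$ consists of constant symbols, function symbols of finite arity $\ge1$ and equations; a topological $\mathcal L$-structure is an $\mathcal L$-structure on a topological space with all operations (jointly) continuous; morphisms are continuous maps preserving constants and operations. *)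

(* Defs.v *)
(* topological spaces are mathcomp-analysis
   [topologicalType]s; arbitrary products use [prod_topology], subspaces use
   [set_type] (initial topology of the inclusion). *)
From HB Require Import structures.
From mathcomp Require Import all_boot all_order all_algebra.
From mathcomp Require Import all_classical all_reals all_analysis.

Set Implicit Arguments.
Unset Strict Implicit.
Unset Printing Implicit Defensive.

Local Open Scope classical_set_scope.

Definition is_homeomorphism (X Y : topologicalType) (f : X -> Y) : Prop :=
  continuous f /\ exists g : Y -> X, continuous g /\ cancel f g /\ cancel g f.

Definition homeomorphic (X Y : topologicalType) : Prop :=
  exists f : X -> Y, is_homeomorphism f.

Definition is_reflection (C : topologicalType -> Prop) (X R : topologicalType)
    (r : X -> R) : Prop :=
  [/\ C R, continuous r, (forall y : R, exists x : X, r x = y) &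
   forall (Y : topologicalType), C Y -> forall f : X -> Y, continuous f ->
     exists! g : R -> Y, continuous g /\ g \o r = f].

Definition epireflective_Top (C : topologicalType -> Prop) : Prop :=
  [/\ (forall X Y : topologicalType, C X -> homeomorphic X Y -> C Y),
      (forall (I : Type) (T : I -> topologicalType),
         (forall i, C (T i)) -> C (prod_topology T)),
      (forall (X : topologicalType) (A : set X), C X -> C (set_type A)) &
      (forall X : topologicalType, exists (R : topologicalType) (r : X -> R),
         @is_reflection C X R r)].

Definition is_reflected_map (X Y RX RY : topologicalType) (rX : X -> RX)
    (rY : Y -> RY) (f : X -> Y) (g : RX -> RY) : Prop :=
  continuous g /\ g \o rX = rY \o f.

Definition preserves_products (C : topologicalType -> Prop) : Prop :=
  forall (I : Type) (X : I -> topologicalType)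
         (R : topologicalType) (r : prod_topology X -> R)
         (RX : I -> topologicalType) (rX : forall i, X i -> RX i),
    @is_reflection C (prod_topology X) R r ->
    (forall i, @is_reflection C (X i) (RX i) (rX i)) ->
    forall mu : R -> prod_topology RX, continuous mu ->
      (forall j : I, is_reflected_map r (rX j) (fun x => x j)
                                      (fun y => mu y j)) ->
      is_homeomorphism mu.

Record signature := Signature {
  csym : Type;
  fsym : Type;
  arity : fsym -> nat;
  arity_pos : forall f, (0 < arity f)%N }.

Inductive term (S : signature) : Type :=
  | tvar of nat
  | tcst of csym S
  | tapp (f : fsym S) of ('I_(arity f) -> term S).

Record algebraic_system := AlgebraicSystem {
  sig_of :> signature;
  equations : term sig_of -> term sig_of -> Prop }.

Record Lstructure (S : signature) (X : Type) := LStructure {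
  lconst : csym S -> X;
  lop : forall f : fsym S, ('I_(arity f) -> X) -> X }.
Arguments lconst {S X} l c.
Arguments lop {S X} l f xs.
Arguments tvar {S} n.
Arguments tcst {S} c.
Arguments tapp {S} f ts.

Fixpoint eval_term (S : signature) (X : Type) (A : Lstructure S X)
    (v : nat -> X) (t : term S) : X :=
  match t with
  | tvar n => v n
  | tcst c => lconst A c
  | tapp f ts => lop A f (fun i => eval_term A v (ts i))
  end.

Record TopL (L : algebraic_system) := MkTopL {
  tl_space :> topologicalType;
  tl_str : Lstructure L tl_space;
  tl_cont : forall f : fsym L,
    continuous (lop tl_str f : prod_topology (fun _ : 'I_(arity f) => tl_space)
                               -> tl_space);
  tl_eqs : forall t1 t2, equations t1 t2 ->
    forall v : nat -> tl_space, eval_term tl_str v t1 = eval_term tl_str v t2 }.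

Definition is_TopL_hom (L : algebraic_system) (A B : TopL L) (h : A -> B) : Prop :=
  [/\ continuous h,
      (forall c, h (lconst (tl_str A) c) = lconst (tl_str B) c) &
      (forall f (xs : 'I_(arity f) -> A),
         h (lop (tl_str A) f xs) = lop (tl_str B) f (h \o xs))].

Definition TopL_iso (L : algebraic_system) (A B : TopL L) : Prop :=
  exists (h : A -> B) (g : B -> A),
    [/\ is_TopL_hom h, is_TopL_hom g, cancel h g & cancel g h].

Definition TopL_epi (L : algebraic_system) (A B : TopL L) (e : A -> B) : Prop :=
  forall (D : TopL L) (k1 k2 : B -> D), is_TopL_hom k1 -> is_TopL_hom k2 ->
    k1 \o e = k2 \o e -> k1 = k2.

Definition epireflective_TopL (L : algebraic_system) (K : TopL L -> Prop) : Prop :=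
  (forall A B : TopL L, K A -> TopL_iso A B -> K B) /\
  (forall A : TopL L, exists (B : TopL L) (eta : A -> B),
     [/\ K B, is_TopL_hom eta, TopL_epi eta &
      forall (D : TopL L), K D -> forall g : A -> D, is_TopL_hom g ->
        exists! k : B -> D, is_TopL_hom k /\ k \o eta = g]).

(* r_C(TopL): the structures on r_C X, for (U, X) in TopL, whose constants
   and operations are those induced by the reflection map r_(X,C), i.e.
   those B for which some C-reflection eta : X -> B of the underlying space
   of some A in TopL is an L-homomorphism (B being considered up to the
   choice of reflection, i.e. up to isomorphism). *)
Definition rC_TopL (C : topologicalType -> Prop) (L : algebraic_system)
    (B : TopL L) : Prop :=
  exists (A : TopL L) (eta : A -> B), @is_reflection C A B eta /\ is_TopL_hom eta.

(* Main.v *)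
Require Import Defs.
From mathcomp Require Import all_boot all_order all_algebra.
From mathcomp Require Import all_classical all_reals all_analysis.

Local Open Scope classical_set_scope.

Lemma prod_cont (Y : topologicalType) (I : Type) (T : I -> topologicalType)
  (f : Y -> prod_topology T) : (forall i, continuous (fun y => f y i)) -> continuous f.
Proof.
move=> fc y; apply/cvg_sup => i.
exact: (@continuous_comp_initial (forall i, T i) Y (T i) (fun g => g i) f (fc i) y).
Qed.

Lemma factor_prod (C : topologicalType -> Prop) :
  epireflective_Top C -> preserves_products C ->
  forall (n : nat) (X R : topologicalType) (r : X -> R),
  is_reflection C r ->
  forall (Y : topologicalType), C Y ->
  forall h : prod_topology (fun _ : 'I_n => X) -> Y, continuous h ->
  exists phi : prod_topology (fun _ : 'I_n => R) -> Y,
    continuous phi /\ forall xs, phi (fun i => r (xs i)) = h xs.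
Proof.
move=> [_ _ _ hrefl] hP n X R r hr Y CY h hc.
have [R' [r' hr']] := hrefl (prod_topology (fun _ : 'I_n => X)).
case: (hr) => CR rc rsurj runiv.
case: (hr') => CR' r'c r'surj r'univ.
have hmu : forall j : 'I_n, exists m : R' -> R,
    continuous m /\ m \o r' = r \o (fun x => x j).
  move=> j; have [m [[mc me] _]] := r'univ R CR (r \o (fun x => x j)) (fun x =>
     continuous_comp (@proj_continuous _ (fun _ : 'I_n => X) j x) (rc _)).
  by exists m.
have [mu hmu'] := choice hmu.
pose M : R' -> prod_topology (fun _ : 'I_n => R) := fun y j => mu j y.
have Mc : continuous M by apply: prod_cont => i; exact: (hmu' i).1.
have Mh := hP 'I_n (fun _ => X) R' r' (fun _ => R) (fun _ => r) hr'
   (fun _ => hr) M Mc (fun j => hmu' j).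
case: Mh => _ [N [Nc [MN NM]]].
have [g [[gc ge] _]] := r'univ Y CY h hc.
exists (g \o N); split.
  by move=> x; apply: continuous_comp; [exact: Nc | exact: gc].
move=> xs.
have -> : (fun i => r (xs i)) = M (r' xs).
  apply: functional_extensionality_dep => j; rewrite /M.
  by have := f_equal (fun F => F xs) (hmu' j).2 => /= ->.
by rewrite /= MN; have := f_equal (fun F => F xs) ge.
Qed.

Theorem theorem4p3 (L : algebraic_system) (C : topologicalType -> Prop) :
  epireflective_Top C -> preserves_products C ->
  epireflective_TopL (rC_TopL C (L := L)).
Proof.
move=> hC hP; have hC' := hC; case: hC' => Ciso Cprod Csub Crefl.
split.
  move=> A B [A0 [eta [hr hh]]] [h [g [hh' hg hgh hhg]]].
  case: hr => CA etac etasurj etauniv.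
  case: hh => _ etaconst etaop.
  case: hh' => hc hconst hop.
  case: hg => gc _ _.
  exists A0, (h \o eta); split; last split.
  - split.
    + apply: (Ciso A) => //; exists h; split => //; exists g; split => //.
    + by move=> x; apply: continuous_comp; [exact: etac | exact: hc].
    + move=> y; have [x hx] := etasurj (g y); exists x => /=.
      by rewrite hx hhg.
    + move=> Y CY f fc.
      have [k [[kc ke] kuniq]] := etauniv Y CY f fc.
      exists (k \o g); split.
        split; first by move=> y; apply: continuous_comp; [exact: gc | exact: kc].
        by apply: funext => x /=; rewrite hgh; have := f_equal (fun F => F x) ke.
      move=> k' [k'c k'e].
      have E : k = k' \o h.
        apply: kuniq; split.
          by move=> x; apply: continuous_comp; [exact: hc | exact: k'c].
        exact: k'e.
      by apply: funext => y /=; rewrite E /= hhg.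
  - by move=> x; apply: continuous_comp; [exact: etac | exact: hc].
  - by move=> c /=; rewrite etaconst hconst.
  - by move=> f xs /=; rewrite etaop hop.
move=> A.
have [R [r hr]] := Crefl A.
case: (hr) => CR rc rsurj runiv.
have [s hs] := choice rsurj.
have hphi : forall f : Defs.fsym L, exists phi : prod_topology (fun _ : 'I_(arity f) => R) -> R,
    continuous phi /\ forall xs, phi (fun i => r (xs i)) = r (lop (tl_str A) f xs).
  move=> f; apply: (@factor_prod C hC hP _ _ _ r hr R CR (fun xs => r (lop (tl_str A) f xs))).
  by move=> x; apply: continuous_comp; [exact: tl_cont | exact: rc].
pose SR : Lstructure L R := LStructure (fun c => r (lconst (tl_str A) c))
   (fun f ys => r (lop (tl_str A) f (fun i => s (ys i)))).
have key : forall f (xs : 'I_(arity f) -> A),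
    lop SR f (fun i => r (xs i)) = r (lop (tl_str A) f xs).
  move=> f xs; have [phi [_ phie]] := hphi f.
  rewrite /= -phie -[RHS]phie; congr phi.
  by apply: funext => i; rewrite hs.
have cont : forall f : Defs.fsym L,
    continuous (lop SR f : prod_topology (fun _ : 'I_(arity f) => R) -> R).
  move=> f; have [phi [phic phie]] := hphi f.
  have -> : (lop SR f : prod_topology (fun _ : 'I_(arity f) => R) -> R) = phi.
    apply: funext => ys /=; rewrite -phie; congr phi.
    by apply: funext => i; rewrite hs.
  exact: phic.
have SRc : forall c, lconst SR c = r (lconst (tl_str A) c) by [].
have SRo : forall f ys, lop SR f ys = r (lop (tl_str A) f (fun i => s (ys i))) by [].
clearbody SR.
have evh : forall (w : nat -> A) (t : term L),
    eval_term SR (fun k => r (w k)) t = r (eval_term (tl_str A) w t).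
  move=> w; elim => [m|c|f ts IH] //=.
  rewrite -key; congr (lop SR f); apply: funext => i; exact: IH.
have eqs : forall t1 t2, @Defs.equations L t1 t2 ->
    forall v : nat -> R, eval_term SR v t1 = eval_term SR v t2.
  move=> t1 t2 e v.
  have -> : v = (fun k => r (s (v k))) by apply: funext => k; rewrite hs.
  by rewrite !evh (tl_eqs e).
pose B := MkTopL cont eqs.
have rhom : @is_TopL_hom L A B r.
  split; [exact: rc | move=> c /=; by rewrite SRc | move=> f xs /=; by rewrite -key].
exists B, r; split => //.
- by exists A, r.
- move=> D k1 k2 _ _ e; apply: funext => y.
  by rewrite -(hs y); have := f_equal (fun F => F (s y)) e.
- move=> D [A' [eta' [hr' _]]] g [gc gconst gop].
  case: hr' => CD _ _ _.
  have [k [[kc ke] kuniq]] := runiv D CD g gc.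
  exists k; split.
    split => //; split => //.
    + by move=> c /=; rewrite SRc; have := f_equal (fun F => F (lconst (tl_str A) c)) ke => /= ->.
    + move=> f ys /=; rewrite SRo.
      have := f_equal (fun F => F (lop (tl_str A) f (fun i => s (ys i)))) ke => /= ->.
      rewrite gop; congr (lop _ f); apply: funext => i /=.
      by have := f_equal (fun F => F (s (ys i))) ke => /= <-; rewrite hs.
  move=> k' [[k'c _ _] k'e]; apply: kuniq; split => //.
Qed.
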